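(* Let $\Gamma\subset\mathrm{SL}_2(\mathbb{C})$ be finite, $\Gamma'\subset\Gamma$ a normal subgroup, and $c\in(\mathbb{C}\Gamma)^\Gamma_1\cap\mathbb{C}\Gamma'$ (so $c$ is also a central element of $\mathbb{C}\Gamma'$ of the form $1+\sum_{\gamma\ne1}c_\gamma\gamma$). Let $\mathcal{A}'_c=e'H'_ce'$ be the corresponding quantization of $\mathbb{C}^2/\Gamma'$ and $\mathcal{A}_c=eH_ce$ that of $\mathbb{C}^2/\Gamma$. Then $\Gamma/\Gamma'$ acts on $\mathcal{A}'_c$ by algebra automorphisms, and the quantizations $(\mathcal{A}'_c)^{\Gamma/\Gamma'}$ and $\mathcal{A}_c$ of $\mathbb{C}^2/\Gamma$ are isomorphic.
   Context: $(\mathbb{C}\Gamma)^\Gamma_1$ denotes central elements of $\mathbb{C}\Gamma$ of the form $c=1+\sum_{\gamma\ne1}c_\gamma\gamma$. $H_c=\mathbb{C}\langle x,y\rangle\#\Gamma/(xy-yx-c)$ is the Crawley-Boevey–Holland algebra, $e\in\mathbb{C}\Gamma$ the averaging idempotent, and $eH_ce$ (with unit $e$) is a filtered quantization of $\mathbb{C}[\mathbb{C}^2/\Gamma]$; similarly $H'_c$, $e'$ for $\Gamma'$. *)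

(* Defs.v *)
From mathcomp Require Import all_boot all_algebra.
From mathcomp Require Import reals complex.
Set Implicit Arguments. Unset Strict Implicit. Unset Printing Implicit Defensive.
Import GRing.Theory.
Local Open Scope ring_scope.

Section CBH.
Variable F : fieldType.

Definition finite_subgroup_SL2 (G : seq 'M[F]_2) : Prop :=
  [/\ uniq G, 1 \in G,
      {in G &, forall g h, g * h \in G},
      {in G, forall g, g \in unitmx /\ invmx g \in G} &
      {in G, forall g, \det g = 1}].

Definition normal_subgroup (K G : seq 'M[F]_2) : Prop :=
  [/\ uniq K, 1 \in K,
      {in K &, forall g h, g * h \in K},
      {in K, forall g, invmx g \in K} &
      {subset K <= G}] /\
  {in G & K, forall g h, g * h * invmx g \in K}.

(* An element c = sum_g c g . g of the group algebra F[G], given by its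
   coefficient function (supported on G). *)
Definition in_group_algebra (G : seq 'M[F]_2) (c : 'M[F]_2 -> F) : Prop :=
  forall g, g \notin G -> c g = 0.

(* c is central in F[G]: g * c = c * g for every g in G, compared
   coefficientwise (coefficient of k on both sides). *)
Definition central_in_group_algebra (G : seq 'M[F]_2) (c : 'M[F]_2 -> F) :=
  in_group_algebra G c /\
  {in G, forall g, forall k, c (invmx g * k) = c (k * invmx g)}.

Definition central_one (G : seq 'M[F]_2) (c : 'M[F]_2 -> F) :=
  central_in_group_algebra G c /\ c 1 = 1.

Definition alg_hom (A B : algType F) (f : A -> B) : Prop :=
  [/\ f 1 = 1, forall a b, f (a * b) = f a * f b &
      forall (k : F) a b, f (k *: a + b) = k *: f a + f b].

(* The defining relations of H_c = F<x,y> # G / (xy - yx - c), where G acts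
   on F^2 = F x + F y (column vectors) and g v g^-1 = g(v). *)
Definition CBH_rel (B : algType F) (G : seq 'M[F]_2) (c : 'M[F]_2 -> F)
    (X Y : B) (iota : 'M[F]_2 -> B) : Prop :=
  [/\ iota 1 = 1,
      {in G &, forall g h, iota (g * h) = iota g * iota h},
      {in G, forall g, iota g * X = (g 0 0 *: X + g 1 0 *: Y) * iota g},
      {in G, forall g, iota g * Y = (g 0 1 *: X + g 1 1 *: Y) * iota g} &
      X * Y - Y * X = \sum_(g <- G) c g *: iota g].

Definition on_gens (A B : algType F) (G : seq 'M[F]_2) (f : A -> B)
    (X Y : A) (iota : 'M[F]_2 -> A) (X' Y' : B) (iota' : 'M[F]_2 -> B) :=
  [/\ f X = X', f Y = Y' & {in G, forall g, f (iota g) = iota' g}].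

(* (H, X, Y, iota) is the Crawley-Boevey--Holland algebra H_c: the algebra
   presented by generators x, y, G and the relations above, i.e. it
   satisfies the relations and is initial among algebras satisfying them. *)
Definition is_CBH (H : algType F) (G : seq 'M[F]_2) (c : 'M[F]_2 -> F)
    (X Y : H) (iota : 'M[F]_2 -> H) : Prop :=
  CBH_rel G c X Y iota /\
  forall (B : algType F) (X' Y' : B) (iota' : 'M[F]_2 -> B),
    CBH_rel G c X' Y' iota' ->
    (exists f : H -> B, alg_hom f /\ on_gens G f X Y iota X' Y' iota') /\
    (forall f1 f2 : H -> B, alg_hom f1 -> alg_hom f2 ->
       on_gens G f1 X Y iota X' Y' iota' -> on_gens G f2 X Y iota X' Y' iota' ->
       f1 =1 f2).

Definition avg_idem (H : algType F) (G : seq 'M[F]_2) (iota : 'M[F]_2 -> H) : H :=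
  (size G)%:R^-1 *: \sum_(g <- G) iota g.

Definition spherical (H : algType F) (e : H) (a : H) : Prop := e * a * e = a.

Definition word (H : algType F) (X Y : H) (w : seq bool) : H :=
  \prod_(b <- w) (if b then X else Y).

(* Standard filtration of H_c: deg x = deg y = 1, deg g = 0.
   filt k a  <->  a lies in the span of the w * g, |w| <= k, g in G. *)
Definition filt (H : algType F) (G : seq 'M[F]_2) (X Y : H)
    (iota : 'M[F]_2 -> H) (k : nat) (a : H) : Prop :=
  exists s : seq (F * (seq bool * 'M[F]_2)),
    all (fun t => (size t.2.1 <= k)%N && (t.2.2 \in G)) s /\
    a = \sum_(t <- s) t.1 *: (word X Y t.2.1 * iota t.2.2).

(* F_{k-1}, with F_{-1} = 0. *)
Definition filt_pred (H : algType F) (G : seq 'M[F]_2) (X Y : H)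
    (iota : 'M[F]_2 -> H) (k : nat) (a : H) : Prop :=
  if k is k'.+1 then filt G X Y iota k' a else a = 0.

End CBH.

(* Main.v *)
Require Import Defs.
From mathcomp Require Import all_boot all_algebra.
From mathcomp Require Import reals complex.
From HB Require Import structures.
From mathcomp Require boolp.
Set Implicit Arguments. Unset Strict Implicit. Unset Printing Implicit Defensive.
Import GRing.Theory.
Local Open Scope ring_scope.

Section Grp.
Variable F : fieldType.
Implicit Types S : seq 'M[F]_2.

Definition is_grp S := [/\ uniq S, 1 \in S, {in S &, forall g h, g * h \in S},
  {in S, forall g, g^-1 \in S} & {in S, forall g, g \is a GRing.unit}].

Lemma grp_G G : finite_subgroup_SL2 G -> is_grp G.
Proof.
case=> uG G1 GM GV _; split=> // g gG; by case: (GV g gG).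
Qed.

Lemma grp_K K G : finite_subgroup_SL2 G -> normal_subgroup K G -> is_grp K.
Proof.
case=> _ _ _ GV _ [[uK K1 KM KV KG] _]; split=> // g gK.
by case: (GV g (KG g gK)).
Qed.

Lemma sum_reindex S (V : nmodType) (f : 'M[F]_2 -> 'M[F]_2) (Fv : 'M[F]_2 -> V) :
  uniq S -> {in S, forall x, f x \in S} -> {in S &, injective f} ->
  \sum_(x <- S) Fv (f x) = \sum_(x <- S) Fv x.
Proof.
move=> uS fS finj; rewrite -(big_map f xpredT Fv); apply: perm_big.
have u1 : uniq (map f S) by rewrite map_inj_in_uniq.
have sub : {subset map f S <= S} by move=> y /mapP [x xS ->]; apply: fS.
have hs : (size S <= size (map f S))%N by rewrite size_map.
have [_ eqi] := uniq_min_size u1 sub hs.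
by apply: uniq_perm.
Qed.

Lemma sum_lmul S (V : nmodType) (Fv : 'M[F]_2 -> V) g : is_grp S -> g \in S ->
  \sum_(x <- S) Fv (g * x) = \sum_(x <- S) Fv x.
Proof.
case=> uS _ SM _ SU gS; apply: sum_reindex => //; first by move=> x xS; exact: SM.
by move=> x y _ _; apply: mulrI; apply: SU.
Qed.

Lemma sum_rmul S (V : nmodType) (Fv : 'M[F]_2 -> V) g : is_grp S -> g \in S ->
  \sum_(x <- S) Fv (x * g) = \sum_(x <- S) Fv x.
Proof.
case=> uS _ SM _ SU gS; apply: sum_reindex => //; first by move=> x xS; exact: SM.
by move=> x y _ _; apply: mulIr; apply: SU.
Qed.

Lemma sum_conj S (V : nmodType) (Fv : 'M[F]_2 -> V) g : uniq S -> g \is a GRing.unit ->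
  {in S, forall x, g * x * g^-1 \in S} ->
  \sum_(x <- S) Fv (g * x * g^-1) = \sum_(x <- S) Fv x.
Proof.
move=> uS gU cS; apply: sum_reindex => // x y _ _ /(divIr gU).
exact: mulrI.
Qed.

Lemma sum_restrict G K (V : nmodType) (f : 'M[F]_2 -> V) :
  uniq G -> uniq K -> {subset K <= G} -> (forall g, g \notin K -> f g = 0) ->
  \sum_(g <- G) f g = \sum_(g <- K) f g.
Proof.
move=> uG uK KG f0; rewrite (bigID (mem K)) /= [X in _ + X]big1 ?addr0; last first.
  by move=> g /f0.
rewrite -big_filter; apply: perm_big; apply: uniq_perm; rewrite ?filter_uniq //.
by move=> x; rewrite mem_filter; case xK: (x \in K) => //=; rewrite KG.
Qed.

End Grp.
Section Hom.
Variable F : fieldType.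
Variables (A B C : algType F).

Lemma homD (f : A -> B) : alg_hom f -> forall a b, f (a + b) = f a + f b.
Proof. move=> [_ _ hl] a b. have := hl 1 a b. by rewrite !scale1r. Qed.
Lemma hom0 (f : A -> B) : alg_hom f -> f 0 = 0.
Proof.
move=> hf; have := homD hf 0 0; rewrite addr0 => h.
by apply: (addrI (f 0)); rewrite -h addr0.
Qed.
Lemma homZ (f : A -> B) : alg_hom f -> forall k a, f (k *: a) = k *: f a.
Proof.
move=> hf k a; have := (let: And3 _ _ hl := hf in hl) k a 0.
by rewrite !addr0 hom0 // addr0.
Qed.
Lemma homN (f : A -> B) : alg_hom f -> forall a, f (- a) = - f a.
Proof. by move=> hf a; rewrite -scaleN1r homZ // scaleN1r. Qed.
Lemma homB (f : A -> B) : alg_hom f -> forall a b, f (a - b) = f a - f b.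
Proof. by move=> hf a b; rewrite homD // homN. Qed.
Lemma homM (f : A -> B) : alg_hom f -> forall a b, f (a * b) = f a * f b.
Proof. by case. Qed.
Lemma hom1 (f : A -> B) : alg_hom f -> f 1 = 1.
Proof. by case. Qed.
Lemma hom_sum (f : A -> B) I (r : seq I) (P : pred I) (Fa : I -> A) : alg_hom f ->
  f (\sum_(i <- r | P i) Fa i) = \sum_(i <- r | P i) f (Fa i).
Proof. by move=> hf; apply: (big_morph f (homD hf) (hom0 hf)). Qed.
End Hom.

Lemma hom_comp (F : fieldType) (A B C : algType F) (f : A -> B) (g : B -> C) : alg_hom f -> alg_hom g -> alg_hom (g \o f).
Proof.
move=> hf hg; rewrite /alg_hom; split=> [|a b|k a b] /=; first by rewrite (hom1 hf) (hom1 hg).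
  by rewrite (homM hf) (homM hg).

move: hf hg => [_ _ ->] [_ _ ->] //.
Qed.


Lemma hom_id (F : fieldType) (A : algType F) : alg_hom (@id A).
Proof. by []. Qed.

Section Vec.
Variable F : fieldType.
Variables (B : algType F) (X Y : B).
Definition vec (u : 'cV[F]_2) : B := u 0 0 *: X + u 1 0 *: Y.
Definition e0 : 'cV[F]_2 := delta_mx 0 0.
Definition e1 : 'cV[F]_2 := delta_mx 1 0.

Lemma mulcolE (g : 'M[F]_2) (u : 'cV[F]_2) i : (g *m u) i 0 = g i 0 * u 0 0 + g i 1 * u 1 0.
Proof.
have l1 : (lift ord0 (ord0 : 'I_1)) = 1 :> 'I_2 by apply: val_inj.
have l0 : ord0 = 0 :> 'I_2 by apply: val_inj.
by rewrite mxE !big_ord_recl big_ord0 addr0 l1 l0.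
Qed.

Lemma vec_e0 : vec e0 = X.
Proof. by rewrite /vec /e0 !mxE /= scale1r scale0r addr0. Qed.
Lemma vec_e1 : vec e1 = Y.
Proof. by rewrite /vec /e1 !mxE /= scale1r scale0r add0r. Qed.

Lemma vec_col0 (g : 'M[F]_2) : vec (g *m e0) = g 0 0 *: X + g 1 0 *: Y.
Proof. by rewrite /vec !mulcolE /e0 !mxE /= !mulr1 !mulr0 !addr0. Qed.
Lemma vec_col1 (g : 'M[F]_2) : vec (g *m e1) = g 0 1 *: X + g 1 1 *: Y.
Proof. by rewrite /vec !mulcolE /e1 !mxE /= !mulr1 !mulr0 !add0r. Qed.

Lemma vec_lin (a : F) u v : vec (a *: u + v) = a *: vec u + vec v.
Proof.
rewrite /vec !mxE !scalerDl -!scalerA scalerDr.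
by rewrite addrACA.
Qed.

Lemma vec_mulmx (g : 'M[F]_2) u :
  vec (g *m u) = u 0 0 *: vec (g *m e0) + u 1 0 *: vec (g *m e1).
Proof.
rewrite vec_col0 vec_col1 /vec !mulcolE !scalerDr !scalerDl !scalerA.
rewrite [u 0 0 * _]mulrC [u 1 0 * _]mulrC [u 0 0 * g 1 0]mulrC [u 1 0 * g 1 1]mulrC.
by rewrite !addrA; congr (_ + _); rewrite addrAC.
Qed.

Lemma vec_mul1 u : vec (1 *m u) = vec u.
Proof. by rewrite mul1mx. Qed.

Definition br (x y : B) := x * y - y * x.
Lemma brDl x y z : br (x + y) z = br x z + br y z.
Proof. by rewrite /br mulrDl mulrDr opprD addrACA. Qed.
Lemma brDr x y z : br z (x + y) = br z x + br z y.
Proof. by rewrite /br mulrDl mulrDr opprD addrACA. Qed.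
Lemma brZl k x z : br (k *: x) z = k *: br x z.
Proof. by rewrite /br -scalerAl -scalerAr scalerBr. Qed.
Lemma brZr k x z : br z (k *: x) = k *: br z x.
Proof. by rewrite /br -scalerAl -scalerAr scalerBr. Qed.
Lemma brxx x : br x x = 0.
Proof. by rewrite /br subrr. Qed.
Lemma br_anti x y : br y x = - br x y.
Proof. by rewrite /br opprB. Qed.

Lemma comm_vec u v :
  vec u * vec v - vec v * vec u = (u 0 0 * v 1 0 - u 1 0 * v 0 0) *: (X * Y - Y * X).
Proof.
rewrite -/(br (vec u) (vec v)) -/(br X Y) /vec.
rewrite !(brDl, brDr, brZl, brZr) !brxx (br_anti X Y).
by rewrite !scaler0 add0r addr0 !scalerN !scalerA scalerBl.
Qed.

End Vec.
Arguments e0 {F}.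
Arguments e1 {F}.
Lemma det2 (F : fieldType) (g : 'M[F]_2) : \det g = g 0 0 * g 1 1 - g 0 1 * g 1 0.
Proof.
rewrite (expand_det_row g 0) !big_ord_recl big_ord0 addr0 /cofactor !det_mx11.
have l1 : (lift ord0 (ord0 : 'I_1)) = 1 :> 'I_2 by apply: val_inj.
have l0 : ord0 = 0 :> 'I_2 by apply: val_inj.
have e1 : lift (0:'I_2) (0:'I_1) = 1 by apply: val_inj.
have e2 : lift (1:'I_2) (0:'I_1) = 0 by apply: val_inj.
have e3 : lift (ord0:'I_2) (0:'I_1) = 1 by apply: val_inj.
rewrite !mxE /= !(l1, l0, e1, e2, e3) expr0 expr1 mul1r mulN1r mulrN.
by [].
Qed.
Section MatAlg.
Variables (F : fieldType) (A : algType F) (n : nat).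
Definition MA := 'M[A]_n.+1.
HB.instance Definition _ := GRing.NzRing.on MA.
Lemma MA_mulE (u v : MA) i j : (u * v) i j = \sum_l u i l * v l j.
Proof. by rewrite -mulmxE !mxE. Qed.
Definition mscale (k : F) (M : MA) : MA := map_mx (fun x => k *: x) M.
Fact mscaleA a b v : mscale a (mscale b v) = mscale (a * b) v.
Proof. by apply/matrixP=> i j; rewrite !mxE scalerA. Qed.
Fact mscale1 : left_id 1 mscale.
Proof. by move=> v; apply/matrixP=> i j; rewrite !mxE scale1r. Qed.
Fact mscaleDr : right_distributive mscale +%R.
Proof. by move=> a u v; apply/matrixP=> i j; rewrite !mxE scalerDr. Qed.
Fact mscaleDl v : {morph mscale^~ v: a b / a + b}.
Proof. by move=> a b; apply/matrixP=> i j; rewrite !mxE scalerDl. Qed.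
HB.instance Definition _ := GRing.Zmodule_isLmodule.Build F MA mscaleA mscale1 mscaleDr mscaleDl.
Fact mscaleAl (a : F) (u v : MA) : a *: (u * v) = (a *: u) * v.
Proof.
apply/matrixP=> i j; rewrite [LHS]mxE !MA_mulE scaler_sumr; apply: eq_bigr => l _.
by rewrite !mxE scalerAl.
Qed.
HB.instance Definition _ := GRing.Lmodule_isLalgebra.Build F MA mscaleAl.
Fact mscaleAr (a : F) (u v : MA) : a *: (u * v) = u * (a *: v).
Proof.
apply/matrixP=> i j; rewrite [LHS]mxE !MA_mulE scaler_sumr; apply: eq_bigr => l _.
by rewrite !mxE scalerAr.
Qed.
HB.instance Definition _ := GRing.Lalgebra_isAlgebra.Build F MA mscaleAr.
Lemma MA_scaleE k (u : MA) i j : (k *: u) i j = k *: u i j.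
Proof. by rewrite !mxE. Qed.
Lemma MA_subE (u v : MA) i j : (u - v) i j = u i j - v i j.
Proof. by rewrite !mxE. Qed.
Lemma MA_oneE i j : (1 : MA) i j = (i == j)%:R.
Proof. by rewrite !mxE. Qed.
End MatAlg.

Lemma sum_const_seq (T : Type) (V : nmodType) (s : seq T) (x : V) :
  \sum_(i <- s) x = x *+ size s.
Proof. by elim: s => [|a s IH]; rewrite ?big_nil ?big_cons ?IH ?mulrS. Qed.

Lemma sph_l (F : fieldType) (B : algType F) (p a : B) : p * p = p -> spherical p a -> p * a = a.
Proof. by move=> pp sa; rewrite -sa !mulrA pp. Qed.
Lemma sph_r (F : fieldType) (B : algType F) (p a : B) : p * p = p -> spherical p a -> a * p = a.
Proof. by move=> pp sa; rewrite -sa -!mulrA pp. Qed.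

Section Avg.
Variable F : fieldType.
Variables (B : algType F) (S : seq 'M[F]_2) (iota : 'M[F]_2 -> B).
Hypotheses (gS : is_grp S) (hm : {in S &, forall g h, iota (g * h) = iota g * iota h})
  (hn : (size S)%:R != 0 :> F).

Lemma avg_lmul g : g \in S -> iota g * avg_idem S iota = avg_idem S iota.
Proof.
move=> gSg; rewrite /avg_idem -scalerAr mulr_sumr; congr (_ *: _).
rewrite -[RHS](sum_lmul iota gS gSg) big_seq [RHS]big_seq.
by apply: eq_bigr => h hS; rewrite hm.
Qed.

Lemma avg_rmul g : g \in S -> avg_idem S iota * iota g = avg_idem S iota.
Proof.
move=> gSg; rewrite /avg_idem -scalerAl mulr_suml; congr (_ *: _).
rewrite -[RHS](sum_rmul iota gS gSg) big_seq [RHS]big_seq.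
by apply: eq_bigr => h hS; rewrite hm.
Qed.

Lemma avg_sq : avg_idem S iota * avg_idem S iota = avg_idem S iota.
Proof.
rewrite {2}/avg_idem -scalerAr mulr_sumr big_seq.
rewrite (eq_bigr (fun _ => avg_idem S iota)); last by move=> g gSg; rewrite avg_rmul.
by rewrite -big_seq sum_const_seq -scaler_nat scalerA mulVf // scale1r.
Qed.
End Avg.

Section Rel.
Variable F : fieldType.
Variables (B : algType F) (S : seq 'M[F]_2) (c : 'M[F]_2 -> F) (X Y : B)
  (iota : 'M[F]_2 -> B).
Hypothesis hR : CBH_rel S c X Y iota.

Lemma iota_vec g u : g \in S -> iota g * vec X Y u = vec X Y (g *m u) * iota g.
Proof.
move=> gS; case: hR => _ _ hx hy _.
rewrite {1}/vec mulrDr -!scalerAr hx // hy // -vec_col0 -vec_col1 !scalerAl -mulrDl.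
by rewrite -vec_mulmx.
Qed.

Lemma rel_comm : X * Y - Y * X = \sum_(g <- S) c g *: iota g.
Proof. by case: hR. Qed.
Lemma rel_1 : iota 1 = 1.
Proof. by case: hR. Qed.
Lemma rel_M : {in S &, forall g h, iota (g * h) = iota g * iota h}.
Proof. by case: hR. Qed.

Lemma rel_hom (C : algType F) (f : B -> C) : alg_hom f ->
  CBH_rel S c (f X) (f Y) (f \o iota).
Proof.
move=> hf; case: hR => h1 hM hx hy hc; split=> /=.
- by rewrite h1 (hom1 hf).
- by move=> g h gS hS; rewrite hM // (homM hf).
- by move=> g gS; rewrite -(homM hf) hx // (homM hf) (homD hf) !(homZ hf).
- by move=> g gS; rewrite -(homM hf) hy // (homM hf) (homD hf) !(homZ hf).
- rewrite -(homM hf) -(homM hf) -(homB hf) hc (hom_sum _ _ _ hf).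
  by apply: eq_bigr => g _; rewrite (homZ hf).
Qed.
End Rel.

Section Univ.
Variable F : fieldType.
Variables (H : algType F) (S : seq 'M[F]_2) (c : 'M[F]_2 -> F) (X Y : H)
  (iota : 'M[F]_2 -> H).
Hypothesis hH : is_CBH S c X Y iota.

Lemma univ_unique (C : algType F) (f1 f2 : H -> C) : alg_hom f1 -> alg_hom f2 ->
  f1 X = f2 X -> f1 Y = f2 Y -> {in S, forall g, f1 (iota g) = f2 (iota g)} ->
  f1 =1 f2.
Proof.
move=> h1 h2 eX eY eI.
have hr := rel_hom hH.1 h1.
have := (hH.2 C (f1 X) (f1 Y) (f1 \o iota) hr).2 f1 f2 h1 h2.
apply; split; rewrite //= ?eX ?eY // => g gS /=; by rewrite ?eI.
Qed.

Lemma univ_exists (C : algType F) (X' Y' : C) (iota' : 'M[F]_2 -> C) :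
  CBH_rel S c X' Y' iota' ->
  exists f : H -> C, alg_hom f /\ on_gens S f X Y iota X' Y' iota'.
Proof. by move=> hr; exact: (hH.2 C X' Y' iota' hr).1. Qed.
End Univ.

Section Filt.
Variable F : fieldType.
Variables (B : algType F) (S : seq 'M[F]_2) (X Y : B) (iota : 'M[F]_2 -> B).
Local Notation fl := (filt S X Y iota).

Lemma filt0 n : fl n 0.
Proof. by exists [::]; rewrite big_nil. Qed.

Lemma filtD n x y : fl n x -> fl n y -> fl n (x + y).
Proof.
move=> [s1 [h1 ->]] [s2 [h2 ->]]; exists (s1 ++ s2).
by rewrite all_cat h1 h2 big_cat.
Qed.

Lemma filtZ n k x : fl n x -> fl n (k *: x).
Proof.
move=> [s1 [h1 ->]]; exists (map (fun t => (k * t.1, t.2)) s1).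
rewrite all_map; split; first by apply: sub_all h1 => t.
by rewrite big_map scaler_sumr; apply: eq_bigr => t _; rewrite scalerA.
Qed.

Lemma filt_sum n I (r : seq I) (P : pred I) (f : I -> B) :
  (forall i, P i -> fl n (f i)) -> fl n (\sum_(i <- r | P i) f i).
Proof.
move=> h; apply: (big_ind (fl n)); [exact: filt0 | exact: filtD | exact: h].
Qed.

Lemma filt_mono m n x : (m <= n)%N -> fl m x -> fl n x.
Proof.
move=> mn [s1 [h1 ->]]; exists s1; split => //.
by apply: sub_all h1 => t /andP [h g]; rewrite g (leq_trans h mn).
Qed.

Lemma filt_gen n w g : (size w <= n)%N -> g \in S -> fl n (word X Y w * iota g).
Proof.
move=> wn gS; exists [:: (1, (w, g))]; split; first by rewrite /= wn gS.
by rewrite big_cons big_nil addr0 scale1r.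
Qed.

Lemma word_cons b w : word X Y (b :: w) = (if b then X else Y) * word X Y w.
Proof. by rewrite /word big_cons. Qed.
Lemma word_nil : word X Y [::] = 1.
Proof. by rewrite /word big_nil. Qed.

Lemma filt_vec n u x : fl n x -> fl n.+1 (vec X Y u * x).
Proof.
move=> [s1 [h1 ->]]; rewrite mulr_sumr big_seq; apply: filt_sum => t ts.
have /andP [hw hg] := allP h1 t ts.
rewrite -scalerAr; apply: filtZ; rewrite /vec mulrDl -!scalerAl !mulrA.
have wX w : X * word X Y w = word X Y (true :: w) by rewrite word_cons.
have wY w : Y * word X Y w = word X Y (false :: w) by rewrite word_cons.
by apply: filtD; apply: filtZ; rewrite ?wX ?wY; apply: filt_gen.
Qed.

Lemma filt_iota n x g : {in S &, forall g h, iota (g * h) = iota g * iota h} ->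
  {in S &, forall g h, g * h \in S} -> g \in S -> fl n x -> fl n (x * iota g).
Proof.
move=> hM SM gS [s1 [h1 ->]]; rewrite mulr_suml big_seq; apply: filt_sum => t ts.
have /andP [hw hg] := allP h1 t ts.
rewrite -scalerAl; apply: filtZ; rewrite -mulrA -hM //; apply: filt_gen => //.
exact: SM.
Qed.

End Filt.

Lemma conj_hom (F : fieldType) (B : algType F) (u v : B) : u * v = 1 -> v * u = 1 ->
  alg_hom (fun x => u * x * v).
Proof.
move=> uv vu; rewrite /alg_hom; split.
- by rewrite mulr1.
- by move=> x y; rewrite !mulrA -[u * x * v * u]mulrA vu mulr1.
- by move=> k x y; rewrite mulrDr mulrDl -scalerAr -scalerAl.
Qed.

Record subA (F : fieldType) (A : algType F) (P : A -> bool)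
  (hP : GRing.subsemialg_closed P) : Type := SubA { subA_val :> A; _ : P subA_val }.
Section Sub.
Variables (F : fieldType) (A : algType F) (P : A -> bool).
Hypothesis hP : GRing.subsemialg_closed P.
HB.instance Definition _ := GRing.isSubalgClosed.Build F A P hP.
HB.instance Definition _ := [isSub for @subA_val F A P hP].
HB.instance Definition _ := [Choice of subA hP by <:].
HB.instance Definition _ := [SubChoice_isSubAlgebra of subA hP by <:].
Lemma subA_hom : alg_hom (@subA_val F A P hP : subA hP -> A).
Proof. by []. Qed.
End Sub.

Section Gen.
Variable F : fieldType.
Variables (H : algType F) (S : seq 'M[F]_2) (c : 'M[F]_2 -> F) (X Y : H)
  (iota : 'M[F]_2 -> H).
Hypothesis hH : is_CBH S c X Y iota.

Lemma univ_gen (P : H -> bool) (hP : GRing.subsemialg_closed P) :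
  P X -> P Y -> {in S, forall g, P (iota g)} -> forall x, P x.
Proof.
move=> PX PY PI.
pose B := subA hP.
pose Xs : B := SubA hP PX.
pose Ys : B := SubA hP PY.
pose Is (g : 'M[F]_2) : B := insubd (1 : B) (iota g).
have vI g : g \in S -> val (Is g) = iota g by move=> gS; rewrite /Is insubdK //; apply: PI.
have hv : alg_hom (val : B -> H) := subA_hom hP.
have [hP1 [_ hPD] hPZ hPM] := hP.
have vI' g : P (iota g) -> val (Is g) = iota g by move=> Pg; rewrite /Is insubdK.
have hr : CBH_rel S c Xs Ys Is.
  case: hH.1 => h1 hM hx hy hc; split.
  - by apply: val_inj; rewrite /= vI' h1.
  - move=> g h gS hS; apply: val_inj; rewrite (homM hv) (vI' (g * h)).
      by rewrite !vI // hM.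
    by rewrite hM //; apply: hPM; apply: PI.
  - move=> g gS; apply: val_inj; rewrite !(homM hv) (homD hv) !(homZ hv) /= vI //.
    exact: hx.
  - move=> g gS; apply: val_inj; rewrite !(homM hv) (homD hv) !(homZ hv) /= vI //.
    exact: hy.
  - apply: val_inj; rewrite (homB hv) !(homM hv) (hom_sum _ _ _ hv) /= hc.
    rewrite big_seq [RHS]big_seq; apply: eq_bigr => g gS.
    by congr (_ *: _); rewrite -(vI g gS).
have [f [hf [fX fY fI]]] := univ_exists hH hr.
have hvf := hom_comp hf hv.
have e := univ_unique hH hvf (@hom_id _ H).
move=> x; have <- : (val \o f) x = x.
  by apply: e => //=; [rewrite fX | rewrite fY | move=> g gS; rewrite fI // vI].
exact: valP.
Qed.
End Gen.

Section Main.
Variable F : fieldType.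
Variables (G K : seq 'M[F]_2) (c : 'M[F]_2 -> F)
  (H : algType F) (X Y : H) (iota : 'M[F]_2 -> H)
  (H' : algType F) (X' Y' : H') (iota' : 'M[F]_2 -> H').
Hypotheses (hG : finite_subgroup_SL2 G) (hK : normal_subgroup K G)
  (hc : central_one G c) (hcK : in_group_algebra K c)
  (hH : is_CBH G c X Y iota) (hH' : is_CBH K c X' Y' iota')
  (hchar : forall n : nat, (n.+1)%:R != 0 :> F).

Lemma gG : is_grp G. Proof. exact: grp_G. Qed.
Lemma gK : is_grp K. Proof. exact: grp_K hG hK. Qed.
Lemma uG : uniq G. Proof. by case: gG. Qed.
Lemma uK : uniq K. Proof. by case: gK. Qed.
Lemma G1 : 1 \in G. Proof. by case: gG. Qed.
Lemma K1 : 1 \in K. Proof. by case: gK. Qed.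
Lemma GM : {in G &, forall g h, g * h \in G}. Proof. by case: gG. Qed.
Lemma KM : {in K &, forall g h, g * h \in K}. Proof. by case: gK. Qed.
Lemma GV : {in G, forall g, g^-1 \in G}. Proof. by case: gG. Qed.
Lemma KV : {in K, forall g, g^-1 \in K}. Proof. by case: gK. Qed.
Lemma GU : {in G, forall g, g \is a GRing.unit}. Proof. by case: gG. Qed.
Lemma KU : {in K, forall g, g \is a GRing.unit}. Proof. by case: gK. Qed.
Lemma KG : {subset K <= G}. Proof. by case: hK => [[]]. Qed.
Lemma Kconj g k : g \in G -> k \in K -> g * k * g^-1 \in K.
Proof. by case: hK => _ h gG kK; exact: h. Qed.
Lemma Kconj' g k : g \in G -> k \in K -> g^-1 * k * g \in K.
Proof. by move=> gG kK; rewrite -{2}(invrK g); apply: Kconj => //; apply: GV. Qed.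
Lemma detG g : g \in G -> \det g = 1.
Proof. by case: hG => _ _ _ _ h /h. Qed.
Lemma c0 g : g \notin K -> c g = 0.
Proof. exact: hcK. Qed.
Lemma cconj g k : g \in G -> c (g * k * g^-1) = c k.
Proof.
move=> gG; case: hc => [[_ hcc] _].
have e : forall M : 'M[F]_2, invmx M = M^-1 by [].
have := hcc _ (GV gG) (k * g^-1); rewrite !e invrK => h.
by rewrite -mulrA h divrK ?GU.
Qed.
Lemma sizeG : (size G)%:R != 0 :> F.
Proof.
have : (size G != 0)%N by apply/eqP => /size0nil e; move: G1; rewrite e.
by case: (size G) => // n _; apply: hchar.
Qed.
Lemma sizeK : (size K)%:R != 0 :> F.
Proof.
have : (size K != 0)%N by apply/eqP => /size0nil e; move: K1; rewrite e.
by case: (size K) => // n _; apply: hchar.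
Qed.

Lemma sumK_c (V : lmodType F) (f : 'M[F]_2 -> V) g : g \in G ->
  \sum_(k <- K) c k *: f (g * k * g^-1) = \sum_(k <- K) c k *: f k.
Proof.
move=> gG; rewrite -[RHS](sum_conj (fun k => c k *: f k) uK (GU gG)); last first.
  by move=> k kK; apply: Kconj.
by apply: eq_bigr => k _; rewrite cconj.
Qed.

Lemma relK : CBH_rel K c X' Y' iota'. Proof. exact: hH'.1. Qed.

Lemma relGK : CBH_rel K c X Y iota.
Proof.
case: hH.1 => h1 hM hx hy hcm; split => //.
- by move=> g h gK hK'; apply: hM; apply: KG.
- by move=> g gK; apply: hx; apply: KG.
- by move=> g gK; apply: hy; apply: KG.
- by rewrite hcm; apply: sum_restrict; rewrite ?uG ?uK //; [apply: KG|move=> g /c0 ->; rewrite scale0r].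
Qed.

Lemma sumG_K (V : lmodType F) (f : 'M[F]_2 -> V) :
  \sum_(g <- G) c g *: f g = \sum_(g <- K) c g *: f g.
Proof.
by apply: sum_restrict; rewrite ?uG ?uK //; [apply: KG|move=> g /c0 ->; rewrite scale0r].
Qed.

Definition aX g := vec X' Y' (g *m e0).
Definition aY g := vec X' Y' (g *m e1).
Definition aI g h := iota' (g * h * g^-1).

Lemma col0E (h : 'M[F]_2) i : (h *m e0) i 0 = h i 0.
Proof. by rewrite mulcolE /e0 !mxE /= mulr1 mulr0 addr0. Qed.
Lemma col1E (h : 'M[F]_2) i : (h *m e1) i 0 = h i 1.
Proof. by rewrite mulcolE /e1 !mxE /= mulr1 mulr0 add0r. Qed.

Lemma conjM (g h : 'M[F]_2) : g \is a GRing.unit -> (g * h * g^-1) * g = g * h.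
Proof. by move=> gU; rewrite divrK. Qed.

Lemma rel_alpha g : g \in G -> CBH_rel K c (aX g) (aY g) (aI g).
Proof.
move=> gG; have gU := GU gG; split.
- by rewrite /aI mulr1 divrr // (rel_1 relK).
- move=> h k hK' kK; rewrite /aI -(rel_M relK) ?Kconj //.
  by rewrite !mulrA divrK.
- move=> h hK'; rewrite /aI /aX (iota_vec relK) ?Kconj // mulmxA.
  change ((g * h / g) * g) with ((g * h / g) *m g); rewrite -[(g*h/g) *m g]/((g*h/g) * g).
  rewrite conjM // -mulmxA (vec_mulmx _ _ g) col0E col0E /aY.
  by [].
- move=> h hK'; rewrite /aI /aY (iota_vec relK) ?Kconj // mulmxA.
  rewrite -[(g*h/g) *m g]/((g*h/g) * g).
  rewrite conjM // -mulmxA (vec_mulmx _ _ g) col1E col1E /aX.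
  by [].
- rewrite /aX /aY comm_vec !col0E !col1E (rel_comm relK).
  have -> : g 0 0 * g 1 1 - g 1 0 * g 0 1 = 1.
    by rewrite -(detG gG) det2 [g 1 0 * _]mulrC.
  by rewrite scale1r /aI sumK_c.
Qed.

Lemma reps_ex : exists rs : seq 'M[F]_2, [/\ uniq rs, {subset rs <= G}, 1 \in rs,
   {in rs &, forall r1 r2, r1^-1 * r2 \in K -> r1 = r2} &
   {in G, forall g, exists2 r, r \in rs & r^-1 * g \in K}].
Proof.
pose L1 := 1 :: G.
pose p g := fun h : 'M[F]_2 => h^-1 * g \in K.
pose rep g := nth 1 L1 (find (p g) L1).
have rep_spec g : g \in G -> rep g \in G /\ (rep g)^-1 * g \in K.
  move=> gG; have hh : has (p g) L1.
    by apply/hasP; exists g; [rewrite inE gG orbT | rewrite /p mulVr ?GU ?K1].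
  split; last exact: (nth_find 1 hh).
  have : rep g \in L1 by apply: mem_nth; rewrite -has_find.
  by rewrite inE => /orP [/eqP -> |]; [exact: G1|].
have rep_eq g k : g \in G -> k \in K -> rep g = rep (g * k).
  move=> gG kK; rewrite /rep; congr nth; apply: eq_find => h; rewrite /p.
  apply/idP/idP => hk.
    by rewrite mulrA; apply: KM.
  have -> : h^-1 * g = h^-1 * (g * k) * k^-1 by rewrite mulrA mulrK ?KU.
  by apply: KM => //; apply: KV.
have repK g : g \in G -> rep (rep g) = rep g.
  move=> gG; have [rG rk] := rep_spec g gG.
  by rewrite (rep_eq _ _ rG rk) mulVKr ?GU.
exists (undup (map rep G)); split.
- exact: undup_uniq.
- by move=> r; rewrite mem_undup => /mapP [g gG ->]; case: (rep_spec g gG).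
- rewrite mem_undup; apply/mapP; exists 1; first exact: G1.
  by rewrite /rep /= /p invr1 mulr1 K1.
- move=> r1 r2; rewrite !mem_undup => /mapP [g1 g1G ->] /mapP [g2 g2G ->] hk.
  have [r1G _] := rep_spec g1 g1G.
  by rewrite -repK // -[in RHS]repK // (rep_eq _ _ r1G hk) mulVKr ?GU.
- move=> g gG; exists (rep g); last by case: (rep_spec g gG).
  by rewrite mem_undup; apply/mapP; exists g.
Qed.

Lemma alpha_ex : exists alpha : 'M[F]_2 -> H' -> H', forall g, g \in G ->
  alg_hom (alpha g) /\ on_gens K (alpha g) X' Y' iota' (aX g) (aY g) (aI g).
Proof.
have : forall g, exists f : H' -> H', g \in G ->
    alg_hom f /\ on_gens K f X' Y' iota' (aX g) (aY g) (aI g).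
  move=> g; case gG: (g \in G); last by exists id.
  by have [f hf] := univ_exists hH' (rel_alpha gG); exists f.
by move=> /boolp.choice [alpha h]; exists alpha.
Qed.

Definition e' := avg_idem K iota'.
Definition e := avg_idem G iota.

Lemma e'_sq : e' * e' = e'.
Proof. by apply: avg_sq; [apply: gK | apply: (rel_M relK) | apply: sizeK]. Qed.
Lemma e'_l h : h \in K -> iota' h * e' = e'.
Proof. by apply: avg_lmul; [apply: gK | apply: (rel_M relK)]. Qed.
Lemma e'_r h : h \in K -> e' * iota' h = e'.
Proof. by apply: avg_rmul; [apply: gK | apply: (rel_M relK)]. Qed.
Lemma e_sq : e * e = e.
Proof. by apply: avg_sq; [apply: gG | apply: (rel_M hH.1) | apply: sizeG]. Qed.
Lemma e_l h : h \in G -> iota h * e = e.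
Proof. by apply: avg_lmul; [apply: gG | apply: (rel_M hH.1)]. Qed.
Lemma e_r h : h \in G -> e * iota h = e.
Proof. by apply: avg_rmul; [apply: gG | apply: (rel_M hH.1)]. Qed.

Section Alpha.
Variable alpha : 'M[F]_2 -> H' -> H'.
Hypothesis halpha : forall g, g \in G ->
  alg_hom (alpha g) /\ on_gens K (alpha g) X' Y' iota' (aX g) (aY g) (aI g).

Lemma ahom g : g \in G -> alg_hom (alpha g). Proof. by move/halpha=> []. Qed.
Lemma aXe g : g \in G -> alpha g X' = aX g. Proof. by move/halpha=> [_ []]. Qed.
Lemma aYe g : g \in G -> alpha g Y' = aY g. Proof. by move/halpha=> [_ []]. Qed.
Lemma aIe g h : g \in G -> h \in K -> alpha g (iota' h) = aI g h.
Proof. by move/halpha=> [_ [_ _ hi]] hK'; apply: hi. Qed.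

Lemma alpha_vec g u : g \in G -> alpha g (vec X' Y' u) = vec X' Y' (g *m u).
Proof.
move=> gG; rewrite /vec (homD (ahom gG)) !(homZ (ahom gG)) aXe // aYe //.
by rewrite -/(vec X' Y' (g *m u)) (vec_mulmx _ _ g).
Qed.

Lemma alpha1 : alpha 1 =1 id.
Proof.
apply: (univ_unique hH' (ahom G1) (@hom_id _ H')).
- by rewrite aXe ?G1 // /aX mul1mx vec_e0.
- by rewrite aYe ?G1 // /aY mul1mx vec_e1.
- by move=> h hK'; rewrite aIe ?G1 // /aI invr1 mulr1 mul1r.
Qed.

Lemma alphaM g h : g \in G -> h \in G -> alpha (g * h) =1 alpha g \o alpha h.
Proof.
move=> gG hG'; have ghG := GM gG hG'.
apply: (univ_unique hH' (ahom ghG) (hom_comp (ahom hG') (ahom gG))) => /=.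
- by rewrite aXe // aXe // /aX alpha_vec // mulmxA.
- by rewrite aYe // aYe // /aY alpha_vec // mulmxA.
- move=> k kK; rewrite aIe // aIe // /aI aIe ?Kconj // /aI.
  by rewrite invrM ?GU // !mulrA.
Qed.

Lemma alpha_bij g : g \in G -> bijective (alpha g).
Proof.
move=> gG; exists (alpha g^-1) => x.
  by rewrite -[alpha g^-1 _]/((alpha g^-1 \o alpha g) x) -alphaM ?GV // mulVr ?GU // alpha1.
by rewrite -[alpha g _]/((alpha g \o alpha g^-1) x) -alphaM ?GV // mulrV ?GU // alpha1.
Qed.

Lemma alpha_e' g : g \in G -> alpha g e' = e'.
Proof.
move=> gG; rewrite /e' /avg_idem (homZ (ahom gG)) (hom_sum _ _ _ (ahom gG)).
congr (_ *: _); rewrite big_seq (eq_bigr (fun k => iota' (g * k * g^-1))); last first.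
  by move=> k kK; rewrite aIe.
rewrite -big_seq; apply: (sum_conj iota' uK (GU gG)) => k kK; exact: Kconj.
Qed.

Lemma alpha_sph g a : g \in G -> spherical e' a -> spherical e' (alpha g a).
Proof.
move=> gG sa; rewrite /spherical.
have -> : e' * alpha g a * e' = alpha g (e' * a * e') by rewrite !(homM (ahom gG)) alpha_e'.
by rewrite sa.
Qed.

Lemma iotaV' h : h \in K -> iota' h * iota' h^-1 = 1 /\ iota' h^-1 * iota' h = 1.
Proof.
move=> hK'; rewrite -!(rel_M relK) ?KV // mulrV ?mulVr ?KU // (rel_1 relK); by [].
Qed.

Lemma iotaV h : h \in G -> iota h * iota h^-1 = 1 /\ iota h^-1 * iota h = 1.
Proof.
move=> hG'; rewrite -!(rel_M hH.1) ?GV // mulrV ?mulVr ?GU // (rel_1 hH.1); by [].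
Qed.

Lemma alphaK h a : h \in K -> spherical e' a -> alpha h a = a.
Proof.
move=> hK' sa; have hG' := KG hK'; have [i1 i2] := iotaV' hK'.
have fh := conj_hom i1 i2.
have := univ_unique hH' (ahom hG') fh.
move=> /(_ _ _ _ a) -> //=.
- by rewrite -{1}sa !mulrA e'_l // -mulrA e'_r ?KV // sa.
- rewrite aXe // /aX; have := iota_vec relK e0 hK'; rewrite vec_e0 => ->.
  by rewrite -mulrA i1 mulr1.
- rewrite aYe // /aY; have := iota_vec relK e1 hK'; rewrite vec_e1 => ->.
  by rewrite -mulrA i1 mulr1.
- move=> k kK; rewrite aIe // /aI.
  rewrite (rel_M relK (KM hK' kK) (KV hK')).
  by rewrite (rel_M relK hK' kK).
Qed.

Definition Inv a := spherical e' a /\ {in G, forall g, alpha g a = a}.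

Lemma j_ex : exists j : H' -> H, alg_hom j /\ on_gens K j X' Y' iota' X Y iota.
Proof. have := univ_exists hH' relGK. by []. Qed.

Section J.
Variable j : H' -> H.
Hypotheses (hj : alg_hom j) (hjg : on_gens K j X' Y' iota' X Y iota).

Lemma jX : j X' = X. Proof. by case: hjg. Qed.
Lemma jY : j Y' = Y. Proof. by case: hjg. Qed.
Lemma jI h : h \in K -> j (iota' h) = iota h. Proof. by case: hjg => _ _ hi; apply: hi. Qed.

Lemma j_vec u : j (vec X' Y' u) = vec X Y u.
Proof. by rewrite /vec (homD hj) !(homZ hj) jX jY. Qed.

Lemma j_alpha g a : g \in G -> j (alpha g a) = iota g * j a * iota g^-1.
Proof.
move=> gG; have [i1 i2] := iotaV gG.
have fh := hom_comp hj (conj_hom i1 i2).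
have := univ_unique hH' (hom_comp (ahom gG) hj) fh.
move=> /(_ _ _ _ a) /= -> //=.
- rewrite aXe // /aX j_vec jX; have := iota_vec hH.1 e0 gG; rewrite vec_e0 => ->.
  by rewrite -mulrA i1 mulr1.
- rewrite aYe // /aY j_vec jY; have := iota_vec hH.1 e1 gG; rewrite vec_e1 => ->.
  by rewrite -mulrA i1 mulr1.
- move=> k kK; rewrite aIe // /aI jI; last exact: Kconj.
  rewrite jI // (rel_M hH.1 (GM gG (KG kK)) (GV gG)).
  by rewrite (rel_M hH.1 gG (KG kK)).
Qed.

Lemma inv_comm g a : Inv a -> g \in G -> iota g * j a = j a * iota g.
Proof.
move=> [_ ia] gG; have [_ i2] := iotaV gG.
by rewrite -{2}(ia g gG) j_alpha // -mulrA i2 mulr1.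
Qed.

Lemma inv_e a : Inv a -> e * j a = j a * e.
Proof.
move=> ia; rewrite /e /avg_idem -scalerAl -scalerAr mulr_suml mulr_sumr.
congr (_ *: _); rewrite big_seq [RHS]big_seq; apply: eq_bigr => g gG.
exact: inv_comm.
Qed.

Lemma je' : j e' = (size K)%:R^-1 *: \sum_(k <- K) iota k.
Proof.
rewrite /e' /avg_idem (homZ hj) (hom_sum _ _ _ hj); congr (_ *: _).
by rewrite big_seq [RHS]big_seq; apply: eq_bigr => k kK; rewrite jI.
Qed.

Lemma e_je' : e * j e' = e.
Proof.
rewrite je' -scalerAr mulr_sumr big_seq.
rewrite (eq_bigr (fun _ => e)); last by move=> k kK; rewrite e_r ?KG.
by rewrite -big_seq sum_const_seq -scaler_nat scalerA mulVf ?sizeK // scale1r.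
Qed.

Lemma je'_e : j e' * e = e.
Proof.
rewrite je' -scalerAl mulr_suml big_seq.
rewrite (eq_bigr (fun _ => e)); last by move=> k kK; rewrite e_l ?KG.
by rewrite -big_seq sum_const_seq -scaler_nat scalerA mulVf ?sizeK // scale1r.
Qed.

Definition phi a := e * j a * e.

Lemma phi_sph a : spherical e (phi a).
Proof. by rewrite /spherical /phi !mulrA e_sq -mulrA e_sq. Qed.

Lemma phi_inv a : Inv a -> phi a = j a * e.
Proof. by move=> ia; rewrite /phi inv_e // -mulrA e_sq. Qed.

Lemma phi_e' : phi e' = e.
Proof. by rewrite /phi e_je' e_sq. Qed.

Lemma phi_lin k a b : phi (k *: a + b) = k *: phi a + phi b.
Proof. by rewrite /phi (homD hj) (homZ hj) mulrDr mulrDl -[e * (k *: j a)]scalerAr -scalerAl. Qed.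

Lemma phi_mul a b : Inv a -> Inv b -> phi (a * b) = phi a * phi b.
Proof.
move=> ia ib.
have iab : Inv (a * b).
  rewrite /Inv; split.
    move: ia ib => [sa _] [sb _]; rewrite /spherical.
    by rewrite mulrA (sph_l e'_sq sa) -mulrA (sph_r e'_sq sb).
  by move=> g gG; rewrite (homM (ahom gG)) ia.2 // ib.2.
rewrite !phi_inv //.
rewrite (homM hj).
by rewrite [RHS]mulrA -[j a * e * j b]mulrA inv_e // !mulrA -[RHS]mulrA e_sq.
Qed.

Definition spanP (x : H) : Prop := exists s : seq (H' * 'M[F]_2),
  all (fun t => t.2 \in G) s /\ x = \sum_(t <- s) j t.1 * iota t.2.

Lemma iota_j g b : g \in G -> iota g * j b = j (alpha g b) * iota g.
Proof.
move=> gG; have [_ i2] := iotaV gG.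
by rewrite j_alpha // -mulrA i2 mulr1.
Qed.

Lemma span_closed : GRing.subsemialg_closed (fun x => boolp.asbool (spanP x)).
Proof.
split.
- apply/boolp.asboolP; exists [:: (1, 1)]; split; first by rewrite /= G1.
  by rewrite big_cons big_nil addr0 /= (hom1 hj) mul1r (rel_1 hH.1).
- split.
    apply/boolp.asboolP; exists [::]; split => //; by rewrite big_nil.
  move=> x y /boolp.asboolP [s1 [s1G ->]] /boolp.asboolP [s2 [s2G ->]].
  apply/boolp.asboolP; exists (s1 ++ s2); split; first by rewrite all_cat s1G.
  by rewrite big_cat.
- move=> k x /boolp.asboolP [s1 [s1G ->]]; apply/boolp.asboolP.
  exists (map (fun t => (k *: t.1, t.2)) s1); split; first by rewrite all_map.
  rewrite big_map scaler_sumr; apply: eq_bigr => t _ /=.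
  by rewrite (homZ hj) scalerAl.
- move=> x y /boolp.asboolP [s1 [s1G ->]] /boolp.asboolP [s2 [s2G ->]].
  apply/boolp.asboolP.
  exists [seq (t1.1 * alpha t1.2 t2.1, t1.2 * t2.2) | t1 <- s1, t2 <- s2]; split.
    apply/allP => t /allpairsP [[t1 t2] [t1s t2s ->]] /=.
    by apply: GM; [exact: (allP s1G) | exact: (allP s2G)].
  rewrite big_allpairs_dep mulr_suml big_seq [RHS]big_seq; apply: eq_bigr => t1 t1s.
  rewrite mulr_sumr big_seq [RHS]big_seq; apply: eq_bigr => t2 t2s /=.
  have g1 : t1.2 \in G := allP s1G t1 t1s.
  have g2 : t2.2 \in G := allP s2G t2 t2s.
  rewrite (homM hj) (rel_M hH.1) // !mulrA -[j t1.1 * iota t1.2 * j t2.1]mulrA.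
  by rewrite iota_j // !mulrA.
Qed.

Lemma span_H x : spanP x.
Proof.
apply/boolp.asboolP; apply: (univ_gen hH span_closed).
- apply/boolp.asboolP; exists [:: (X', 1)]; split; first by rewrite /= G1.
  by rewrite big_cons big_nil addr0 /= jX (rel_1 hH.1) mulr1.
- apply/boolp.asboolP; exists [:: (Y', 1)]; split; first by rewrite /= G1.
  by rewrite big_cons big_nil addr0 /= jY (rel_1 hH.1) mulr1.
- move=> g gG; apply/boolp.asboolP; exists [:: (1, g)]; split; first by rewrite /= gG.
  by rewrite big_cons big_nil addr0 /= (hom1 hj) mul1r.
Qed.

Lemma phi_surj b : spherical e b -> exists2 a, Inv a & phi a = b.
Proof.
move=> sb; have [s [sG bE]] := span_H b.
pose A := \sum_(t <- s) t.1.
have ebe : e * b * e = e * j A * e.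
  rewrite bE /A (hom_sum _ _ _ hj) mulr_sumr mulr_suml mulr_sumr mulr_suml.
  rewrite big_seq [RHS]big_seq; apply: eq_bigr => t ts.
  by rewrite -!mulrA e_l // ?(allP sG t ts).
pose avgA := (size G)%:R^-1 *: \sum_(g <- G) alpha g A.
have avg_inv h : h \in G -> alpha h avgA = avgA.
  move=> hG'; rewrite /avgA (homZ (ahom hG')) (hom_sum _ _ _ (ahom hG')).
  congr (_ *: _); rewrite big_seq.
  rewrite (eq_bigr (fun g => alpha (h * g) A)); last by move=> g gG; rewrite alphaM.
  by rewrite -big_seq (sum_lmul (fun g => alpha g A) gG hG').
exists (e' * avgA * e').
  split.
    by rewrite /spherical !mulrA e'_sq -mulrA e'_sq.
  move=> g gG; rewrite !(homM (ahom gG)) alpha_e' // avg_inv //.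
rewrite -sb ebe /phi !(homM hj) !mulrA e_je' -[e * j avgA * j e' * e]mulrA je'_e.
rewrite /avgA (homZ hj) -[e * (_ *: _)]scalerAr -[(_ *: (e * _)) * e]scalerAl.
rewrite (hom_sum _ _ _ hj) mulr_sumr mulr_suml.
rewrite big_seq (eq_bigr (fun _ => e * j A * e)); last first.
  by move=> g gG; rewrite j_alpha // !mulrA e_r // -[_ * iota g^-1 * e]mulrA e_l ?GV.
by rewrite -big_seq sum_const_seq -scaler_nat scalerA mulVf ?sizeG // scale1r.
Qed.

Section Psi.
Variable rs : seq 'M[F]_2.
Hypothesis hrs : [/\ uniq rs, {subset rs <= G}, 1 \in rs,
   {in rs &, forall r1 r2, r1^-1 * r2 \in K -> r1 = r2} &
   {in G, forall g, exists2 r, r \in rs & r^-1 * g \in K}].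

Definition nn := (size rs).-1.
Lemma size_rs : size rs = nn.+1.
Proof.
case: hrs => _ _ r1 _ _; rewrite /nn prednK // lt0n; apply/eqP => /size0nil e0'.
by move: r1; rewrite e0'.
Qed.

Definition rr (i : 'I_nn.+1) := nth 1 rs i.
Lemma rr_rs i : rr i \in rs.
Proof. by apply: mem_nth; rewrite size_rs. Qed.
Lemma rr_G i : rr i \in G.
Proof. by case: hrs => _ h _ _ _; apply: h; apply: rr_rs. Qed.
Lemma rr_U i : rr i \is a GRing.unit.
Proof. exact: GU (rr_G i). Qed.
Lemma rr_inj i i' : (rr i)^-1 * rr i' \in K -> i = i'.
Proof.
case: hrs => u _ _ h _ => /(h _ _ (rr_rs i) (rr_rs i')) /eqP.
by rewrite /rr nth_uniq ?size_rs // => /eqP /val_inj.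
Qed.

Definition i0 : 'I_nn.+1.
Proof. refine (@Ordinal _ (index 1 rs) _); abstract (by case: hrs => _ _ h _ _; rewrite -size_rs index_mem). Defined.
Lemma rr_i0 : rr i0 = 1.
Proof. by rewrite /rr /= nth_index //; case: hrs. Qed.

Lemma rr_ex g i : g \in G -> exists jj, (rr jj)^-1 * g * rr i \in K.
Proof.
move=> gG; case: hrs => _ _ _ _ h; have [r rs' hk] := h _ (GM gG (rr_G i)).
have ir : (index r rs < nn.+1)%N by rewrite -size_rs index_mem.
exists (Ordinal ir); rewrite /rr /= nth_index // -mulrA //.
Qed.

Lemma rr_un g i jj l : (rr jj)^-1 * g * rr i \in K -> (rr l)^-1 * g * rr i \in K -> jj = l.
Proof.
move=> k1K k2K; apply: rr_inj.
have -> : (rr jj)^-1 * rr l = ((rr jj)^-1 * g * rr i) * ((rr l)^-1 * g * rr i)^-1.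
  apply: (mulIr (KU k2K)); rewrite divrK ?KU // !mulrA mulrK ?rr_U //.
by apply: KM => //; apply: KV.
Qed.

Lemma rr_conjK h a b : h \in K -> ((rr a)^-1 * h * rr b \in K) = (a == b).
Proof.
move=> hK'; apply/idP/eqP => [hk|->]; last by apply: Kconj'; rewrite ?rr_G.
by apply: (rr_un hk); apply: Kconj'; rewrite ?rr_G.
Qed.

Local Notation MH := (MA H' nn).

Definition dg (d : 'I_nn.+1 -> H') : MH := \matrix_(a, b) if a == b then d a else 0.
Lemma dgE d a b : dg d a b = if a == b then d a else 0.
Proof. by rewrite mxE. Qed.

Lemma dg_mulr (M : MH) d a b : (M * dg d) a b = M a b * d b.
Proof.
rewrite MA_mulE (bigD1 b) //= big1 ?addr0; first by rewrite dgE eqxx.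
by move=> l lb; rewrite dgE (negbTE lb) mulr0.
Qed.
Lemma dg_mull (M : MH) d a b : (dg d * M) a b = d a * M a b.
Proof.
rewrite MA_mulE (bigD1 a) //= big1 ?addr0; first by rewrite dgE eqxx.
by move=> l lb; rewrite dgE eq_sym (negbTE lb) mul0r.
Qed.
Lemma dg_mul d1 d2 : dg d1 * dg d2 = dg (fun a => d1 a * d2 a).
Proof.
apply/matrixP => a b; rewrite dg_mulr !dgE.
by case: eqP => [->|] //; rewrite mul0r.
Qed.
Lemma dg1 : dg (fun _ => 1) = 1.
Proof. by apply/matrixP => a b; rewrite dgE MA_oneE; case: eqP. Qed.
Lemma dg_lin k d1 d2 : k *: dg d1 + dg d2 = dg (fun a => k *: d1 a + d2 a).
Proof.
apply/matrixP => a b; rewrite mxE MA_scaleE !dgE.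
by case: eqP => //; rewrite scaler0 addr0.
Qed.

Definition PX := dg (fun a => vec X' Y' ((rr a)^-1 *m e0)).
Definition PY := dg (fun a => vec X' Y' ((rr a)^-1 *m e1)).
Definition Pg (g : 'M[F]_2) : MH := \matrix_(a, b)
  if (rr a)^-1 * g * rr b \in K then iota' ((rr a)^-1 * g * rr b) else 0.
Lemma PgE g a b : Pg g a b =
  if (rr a)^-1 * g * rr b \in K then iota' ((rr a)^-1 * g * rr b) else 0.
Proof. by rewrite mxE. Qed.

Lemma dgZ k d : k *: dg d = dg (fun a => k *: d a).
Proof. by apply/matrixP => a b; rewrite MA_scaleE !dgE; case: eqP; rewrite ?scaler0. Qed.
Lemma dgD d1 d2 : dg d1 + dg d2 = dg (fun a => d1 a + d2 a).
Proof. by apply/matrixP => a b; rewrite mxE !dgE; case: eqP; rewrite ?addr0. Qed.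

Lemma vec_split (R g : 'M[F]_2) :
  g 0 0 *: vec X' Y' (R *m e0) + g 1 0 *: vec X' Y' (R *m e1) = vec X' Y' (R *m (g *m e0))
  /\ g 0 1 *: vec X' Y' (R *m e0) + g 1 1 *: vec X' Y' (R *m e1) = vec X' Y' (R *m (g *m e1)).
Proof. by rewrite !(vec_mulmx _ _ R (g *m _)) !col0E !col1E. Qed.

Lemma rel_P : CBH_rel G c PX PY Pg.
Proof.
split.
- apply/matrixP => a b; rewrite PgE MA_oneE mulr1.
  case: (eqVneq a b) => [->|nab]; first by rewrite mulVr ?rr_U // K1 (rel_1 relK).
  case: ifP => // /rr_inj eab; by rewrite eab eqxx in nab.
- move=> g h gG hG'; apply/matrixP => a b; rewrite MA_mulE.
  have [l0 hl0] := rr_ex b hG'.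
  rewrite (bigD1 l0) //= big1 ?addr0 => [|l ll0]; last first.
    rewrite (PgE h l b); case: ifP => hk; last by rewrite mulr0.
    by rewrite (rr_un hk hl0) eqxx in ll0.
  rewrite !PgE hl0.
  have e1' : ((rr a)^-1 * g * rr l0) * ((rr l0)^-1 * h * rr b) = (rr a)^-1 * (g * h) * rr b.
    by rewrite !mulrA mulrK ?rr_U.
  case k1K : ((rr a)^-1 * g * rr l0 \in K).
    have kK : (rr a)^-1 * (g * h) * rr b \in K by rewrite -e1'; apply: KM.
    by rewrite kK /= -(rel_M relK) // e1'.
  rewrite mul0r ifF //; apply/negbTE/negP => kK; move/negP: k1K; apply.
  have -> : (rr a)^-1 * g * rr l0 = ((rr a)^-1 * (g * h) * rr b) * ((rr l0)^-1 * h * rr b)^-1.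
    by rewrite -e1' mulrK ?KU.
  by apply: KM => //; apply: KV.
- move=> g gG; apply/matrixP => a b.
  rewrite dg_mulr /PX /PY !dgZ dgD dg_mull (vec_split _ g).1 PgE.
  case: ifP => kK; last by rewrite mul0r mulr0.
  rewrite (iota_vec relK) // mulmxA mulmxA.
  by rewrite -[(_ * g * rr b) *m (rr b)^-1]/((_ * g * rr b) * (rr b)^-1) mulrK ?rr_U.
- move=> g gG; apply/matrixP => a b.
  rewrite dg_mulr /PX /PY !dgZ dgD dg_mull (vec_split _ g).2 PgE.
  case: ifP => kK; last by rewrite mul0r mulr0.
  rewrite (iota_vec relK) // mulmxA mulmxA.
  by rewrite -[(_ * g * rr b) *m (rr b)^-1]/((_ * g * rr b) * (rr b)^-1) mulrK ?rr_U.
- apply/matrixP => a b; rewrite summxE (eq_bigr (fun g => c g *: Pg g a b)); last first.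
    by move=> g _; rewrite MA_scaleE.
  rewrite (sumG_K (fun g => Pg g a b)).
  rewrite MA_subE /PX /PY !dg_mull !dgE.
  case: (eqVneq a b) => [<-|nab]; last first.
    rewrite !mulr0 subrr big_seq big1 // => g gK.
    by rewrite PgE rr_conjK // (negbTE nab) scaler0.
  rewrite comm_vec !col0E !col1E.
  have -> : ((rr a)^-1) 0 0 * ((rr a)^-1) 1 1 - ((rr a)^-1) 1 0 * ((rr a)^-1) 0 1 = 1.
    by rewrite -(detG (GV (rr_G a))) det2 [_ 1 0 * _]mulrC.
  rewrite scale1r (rel_comm relK) -[LHS](sumK_c iota' (GV (rr_G a))).
  rewrite big_seq [RHS]big_seq; apply: eq_bigr => g gK.
  by rewrite PgE invrK ifT // Kconj' ?rr_G.
Qed.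

Lemma psi_ex : exists psi : H -> MA H' nn, alg_hom psi /\ on_gens G psi X Y iota PX PY Pg.
Proof. have := univ_exists hH rel_P. by []. Qed.

Section PsiF.
Variable psi : H -> MA H' nn.
Hypotheses (hpsi : alg_hom psi) (hpg : on_gens G psi X Y iota PX PY Pg).

Definition D (a : H') := dg (fun b => alpha (rr b)^-1 a).

Lemma rrV_G b : (rr b)^-1 \in G. Proof. exact: GV (rr_G b). Qed.

Lemma D_hom : alg_hom D.
Proof.
rewrite /alg_hom /D; split.
- by rewrite -dg1; congr dg; apply: boolp.funext => b; rewrite (hom1 (ahom (rrV_G b))).
- by move=> x y; rewrite dg_mul; congr dg; apply: boolp.funext => b; rewrite (homM (ahom (rrV_G b))).
- move=> k x y; rewrite dg_lin; congr dg; apply: boolp.funext => b.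
  by rewrite (homD (ahom (rrV_G b))) (homZ (ahom (rrV_G b))).
Qed.

Lemma psi_j a : psi (j a) = D a.
Proof.
case: hpg => pX pY pI.
apply: (univ_unique hH' (hom_comp hj hpsi) D_hom) => /=.
- by rewrite jX pX /D /PX; congr dg; apply: boolp.funext => b; rewrite aXe ?rrV_G.
- by rewrite jY pY /D /PY; congr dg; apply: boolp.funext => b; rewrite aYe ?rrV_G.
- move=> h hK'; rewrite jI // pI ?KG //; apply/matrixP => a' b.
  rewrite PgE /D dgE rr_conjK //; case: eqP => [->|] //.
  by rewrite aIe ?rrV_G // /aI invrK.
Qed.

Definition sc : F := (size G)%:R^-1 * (size K)%:R.

Lemma psi_e : psi e i0 i0 = sc *: e'.
Proof.
case: hpg => pX pY pI.
rewrite /e /avg_idem (homZ hpsi) (hom_sum _ _ _ hpsi) MA_scaleE summxE.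
rewrite big_seq (eq_bigr (fun g => if g \in K then iota' g else 0)); last first.
  by move=> g gG; rewrite pI // PgE rr_i0 invr1 mul1r mulr1.
rewrite -big_seq (sum_restrict (f := fun g => if g \in K then iota' g else 0) uG uK KG); last first.
  by move=> g /negbTE ->.
rewrite big_seq (eq_bigr iota'); last by move=> g ->.
by rewrite -big_seq /e' /avg_idem /sc scalerA -mulrA mulfV ?sizeK // mulr1.
Qed.

Lemma key a : Inv a -> psi (phi a) i0 i0 = sc *: a.
Proof.
move=> ia; rewrite phi_inv // (homM hpsi) psi_j /D dg_mull rr_i0 invr1 alpha1 psi_e.
by rewrite -scalerAr (sph_r e'_sq ia.1).
Qed.

Lemma sc_neq0 : sc != 0.
Proof. by rewrite /sc mulf_neq0 ?invr_eq0 ?sizeG ?sizeK. Qed.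

Lemma phi_inj a b : Inv a -> Inv b -> phi a = phi b -> a = b.
Proof.
move=> ia ib e1'; have := key ia; rewrite e1' key // => /eqP.
by rewrite -subr_eq0 -scalerBr scaler_eq0 (negbTE sc_neq0) subr_eq0 => /eqP.
Qed.

Lemma psi_word w a' b : filt K X' Y' iota' (size w) (psi (word X Y w) a' b).
Proof.
case: hpg => pX pY pI.
elim: w a' b => [|x w IH] a' b /=.
  rewrite word_nil (hom1 hpsi) MA_oneE; case: eqP => _; last exact: filt0.
  by rewrite -[1%:R](rel_1 relK) -[iota' 1]mul1r -(word_nil X' Y'); apply: filt_gen; rewrite ?K1.
rewrite word_cons (homM hpsi); case: x.
  by rewrite pX /PX dg_mull; apply: filt_vec.
by rewrite pY /PY dg_mull; apply: filt_vec.
Qed.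

Lemma psi_filt n x : filt G X Y iota n x -> forall a' b, filt K X' Y' iota' n (psi x a' b).
Proof.
case: hpg => pX pY pI.
move=> [s [hs ->]] a' b; rewrite (hom_sum _ _ _ hpsi) summxE big_seq.
apply: filt_sum => t ts; have /andP [hw hg] := allP hs t ts.
rewrite (homZ hpsi) MA_scaleE; apply: filtZ.
rewrite (homM hpsi) pI // MA_mulE; apply: filt_sum => l _.
rewrite PgE; case: ifP => kK; last by rewrite mulr0; apply: filt0.
apply: filt_iota => //; [exact: (rel_M relK) | exact: KM |].
exact: filt_mono hw (psi_word _ _ _).
Qed.

Lemma hom_word (A B : algType F) (f : A -> B) (XA YA : A) w : alg_hom f ->
  f (word XA YA w) = word (f XA) (f YA) w.
Proof.
move=> hf; elim: w => [|x w IH]; first by rewrite !word_nil (hom1 hf).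
by rewrite !word_cons (homM hf) IH; case: x.
Qed.

Lemma j_filt n a : filt K X' Y' iota' n a -> filt G X Y iota n (j a).
Proof.
move=> [s [hs ->]]; rewrite (hom_sum _ _ _ hj) big_seq; apply: filt_sum => t ts.
have /andP [hw hg] := allP hs t ts.
rewrite (homZ hj) (homM hj) hom_word // jX jY jI //; apply: filtZ; apply: filt_gen => //.
exact: KG.
Qed.

Lemma phi_filt n a : Inv a -> filt K X' Y' iota' n a -> filt G X Y iota n (phi a).
Proof.
move=> ia fa; rewrite phi_inv // /e /avg_idem -scalerAr mulr_sumr; apply: filtZ.
rewrite big_seq; apply: filt_sum => g gG; apply: filt_iota => //.
- exact: (rel_M hH.1).
- exact: GM.
- exact: j_filt.
Qed.

Lemma phi_filt' n a : Inv a -> filt G X Y iota n (phi a) -> filt K X' Y' iota' n a.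
Proof.
move=> ia /psi_filt /(_ i0 i0); rewrite key // => h.
have := filtZ (sc^-1) h; rewrite scalerA mulVf ?sc_neq0 // scale1r; exact.
Qed.

Lemma main_conc :
  [/\ {in G, forall g, alg_hom (alpha g) /\ bijective (alpha g)},
      {in G, forall g, alpha g X' = g 0 0 *: X' + g 1 0 *: Y' /\
                       alpha g Y' = g 0 1 *: X' + g 1 1 *: Y'},
      {in G & K, forall g h, alpha g (iota' h) = iota' (g * h * invmx g)},
      {in G &, forall g h, alpha (g * h) =1 alpha g \o alpha h} &
      ({in G, forall g, forall a, spherical e' a -> spherical e' (alpha g a)} /\
       {in K, forall h, forall a, spherical e' a -> alpha h a = a})] /\
  exists phi : H' -> H,
    let Inv := fun a : H' => spherical e' a /\ {in G, forall g, alpha g a = a} in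
    [/\ (forall a, Inv a -> spherical e (phi a)),
        (forall a b, Inv a -> Inv b -> phi a = phi b -> a = b),
        (forall b, spherical e b -> exists2 a, Inv a & phi a = b),
        phi e' = e &
        (forall (k : F) a b, Inv a -> Inv b ->
           phi (k *: a + b) = k *: phi a + phi b /\ phi (a * b) = phi a * phi b)] /\
    (forall (n : nat) a, Inv a ->
       filt K X' Y' iota' n a <-> filt G X Y iota n (phi a)) /\
    (forall j0 : H' -> H, alg_hom j0 -> on_gens K j0 X' Y' iota' X Y iota ->
       forall (n : nat) a, Inv a -> filt K X' Y' iota' n a ->
         filt_pred G X Y iota n (phi a - e * j0 a * e)).
Proof.
split.
  split.
  - by move=> g gG; split; [exact: ahom | exact: alpha_bij].
  - by move=> g gG; rewrite aXe // aYe // /aX /aY vec_col0 vec_col1.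
  - by move=> g h gG hK'; rewrite aIe.
  - by move=> g h gG hG'; apply: alphaM.
  - split; [by move=> g gG a; apply: alpha_sph | by move=> h hK' a; apply: alphaK].
exists phi => /=; split; [split|split].
- by move=> a _; apply: phi_sph.
- by move=> a b ia ib; apply: phi_inj.
- exact: phi_surj.
- exact: phi_e'.
- by move=> k a b ia ib; split; [apply: phi_lin | apply: phi_mul].
- by move=> n a ia; split; [apply: phi_filt | apply: phi_filt'].
- move=> j0 hj0 hg0 n a ia _.
  have ej : j0 =1 j.
    case: hg0 => h1 h2 h3; apply: (univ_unique hH' hj0 hj); rewrite ?h1 ?h2 ?jX ?jY //.
    by move=> h hK'; rewrite h3 // jI.
  rewrite ej /phi subrr; case: n => [|n] //=; exact: filt0.
Qed.
End PsiF.
End Psi.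
End J.
End Alpha.
End Main.

Unset Implicit Arguments.

Theorem corollary2p9 (R : realType)
    (G K : seq 'M[R[i]]_2) (c : 'M[R[i]]_2 -> R[i])
    (H : algType R[i]) (X Y : H) (iota : 'M[R[i]]_2 -> H)
    (H' : algType R[i]) (X' Y' : H') (iota' : 'M[R[i]]_2 -> H')
    (hG : finite_subgroup_SL2 G) (hK : normal_subgroup K G)
    (hc : central_one G c) (hcK : in_group_algebra K c)
    (hH : is_CBH G c X Y iota) (hH' : is_CBH K c X' Y' iota') :
  let e := avg_idem G iota in
  let e' := avg_idem K iota' in
  exists alpha : 'M[R[i]]_2 -> H' -> H',
    [/\ {in G, forall g, alg_hom (alpha g) /\ bijective (alpha g)},
        {in G, forall g, alpha g X' = g 0 0 *: X' + g 1 0 *: Y' /\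
                         alpha g Y' = g 0 1 *: X' + g 1 1 *: Y'},
        {in G & K, forall g h, alpha g (iota' h) = iota' (g * h * invmx g)},
        {in G &, forall g h, alpha (g * h) =1 alpha g \o alpha h} &
        ({in G, forall g, forall a, spherical e' a -> spherical e' (alpha g a)} /\
         {in K, forall h, forall a, spherical e' a -> alpha h a = a})] /\
    exists phi : H' -> H,
      let Inv := fun a : H' => spherical e' a /\ {in G, forall g, alpha g a = a} in
      [/\ (forall a, Inv a -> spherical e (phi a)),
          (forall a b, Inv a -> Inv b -> phi a = phi b -> a = b),
          (forall b, spherical e b -> exists2 a, Inv a & phi a = b),
          phi e' = e &
          (forall (k : R[i]) a b, Inv a -> Inv b ->
             phi (k *: a + b) = k *: phi a + phi b /\ phi (a * b) = phi a * phi b)] /\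
      (forall (n : nat) a, Inv a ->
         filt K X' Y' iota' n a <-> filt G X Y iota n (phi a)) /\
      (forall j : H' -> H, alg_hom j -> on_gens K j X' Y' iota' X Y iota ->
         forall (n : nat) a, Inv a -> filt K X' Y' iota' n a ->
           filt_pred G X Y iota n (phi a - e * j a * e)).
Proof.
move=> ee ee'.
have hchar : forall n : nat, (n.+1)%:R != 0 :> R[i] by move=> n; rewrite Num.Theory.pnatr_eq0.
have [alpha halpha] := alpha_ex hG hK hc hH'.
have [j [hj hjg]] := j_ex hG hK hcK hH hH'.
have [rs hrs] := reps_ex hG hK.
have [psi [hpsi hpg]] := psi_ex hG hK hc hcK hH hH' hrs.
exists alpha; exact: (main_conc hG hK hH hH' hchar halpha hj hjg hrs hpsi hpg).
Qed.
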